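(* Let $\kappa$ and $\lambda$ be infinite cardinals with $cf(\kappa)\leq\lambda<\kappa$. Let $\mathbb{W}=\{-1\}\cup\kappa$, ordered by declaring $-1$ smaller than every ordinal and ordering $\kappa$ as ordinals. Let $X=\{f\in\mathbb{W}^{\lambda^+}: supp(f)<\lambda^+\}$, where $supp(f)=\min\{\gamma<\lambda^+: f(\alpha)=0 \text{ for every } \alpha\geq\gamma\}$, with the order topology of the lexicographic order. Then $X$ is a strong Choquet (hence Baire), non-archimedean (hence hereditarily paracompact) LOTS, and $dis(X)\leq\lambda^+<\kappa<\Delta(X)$.
   Context: A LOTS is a linearly ordered set with its order topology. A space is non-archimedean if it has a base such that any two elements are either disjoint or one contains the other. A space is strong Choquet if player II has a winning strategy in the strong Choquet game (player I plays an open set $B_n$ and a point $f_n\in B_n$, with $B_n\subseteq A_{n-1}$; player II plays an open $A_n$ with $f_n\in A_n\subseteq B_n$; II wins if $\bigcap_n A_n\neq\emptyset$). $dis(X)$ is the least number of discrete subspaces needed to cover $X$; $\Delta(X)$ is the least cardinality of a non-empty open subset of $X$. *)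

(* Defs.v *)
(* ordinals/cardinals modelled by well-ordered types;
   cardinal comparison via injections. *)
From Stdlib Require Import List Arith.

Definition injective {A B : Type} (f : A -> B) : Prop :=
  forall x y, f x = f y -> x = y.

Definition card_le (A B : Type) : Prop := exists f : A -> B, injective f.
Definition card_lt (A B : Type) : Prop := card_le A B /\ ~ card_le B A.

Definition well_order {T : Type} (R : T -> T -> Prop) : Prop :=
  (forall x, ~ R x x) /\
  (forall x y z, R x y -> R y z -> R x z) /\
  (forall x y, R x y \/ x = y \/ R y x) /\
  well_founded R.

Definition segment {T : Type} (R : T -> T -> Prop) (x : T) : Type :=
  { y : T | R y x }.

(* (T,R) is an infinite cardinal, i.e. an infinite initial ordinal *)
Definition infinite_cardinal {T : Type} (R : T -> T -> Prop) : Prop :=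
  well_order R /\ card_le nat T /\
  forall x : T, ~ card_le T (segment R x).

(* (Tp,Rp) is (the order type of) the successor cardinal of the type L:
   |Tp| > |L| and every proper initial segment has size <= |L|. *)
Definition successor_cardinal_of (L : Type) {Tp : Type} (Rp : Tp -> Tp -> Prop) : Prop :=
  well_order Rp /\ card_lt L Tp /\
  forall x : Tp, card_le (segment Rp x) L.

(* cf(K,R) <= |L| : there is a cofinal map from L into K *)
Definition cof_le {K : Type} (R : K -> K -> Prop) (L : Type) : Prop :=
  exists g : L -> K, forall x : K, exists i : L, R x (g i) \/ x = g i.

(* W = {-1} ∪ kappa : None plays -1 *)
Definition Wlt {K : Type} (R : K -> K -> Prop) (a b : option K) : Prop :=
  match a, b with
  | None, Some _ => True
  | Some x, Some y => R x y
  | _, _ => False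
  end.

Definition is_zero {K : Type} (R : K -> K -> Prop) (k : K) : Prop :=
  forall y, ~ R y k.

(* supp(f) < lambda^+ : f vanishes from some gamma on *)
Definition bounded_support {K Lp : Type} (R : K -> K -> Prop) (Rp : Lp -> Lp -> Prop)
  (f : Lp -> option K) : Prop :=
  exists gamma : Lp, forall alpha : Lp, ~ Rp alpha gamma ->
    exists z, f alpha = Some z /\ is_zero R z.

Definition Xspace {K Lp : Type} (R : K -> K -> Prop) (Rp : Lp -> Lp -> Prop) : Type :=
  { f : Lp -> option K | bounded_support R Rp f }.

Definition lex_lt {K Lp : Type} (R : K -> K -> Prop) (Rp : Lp -> Lp -> Prop)
  (f g : Xspace R Rp) : Prop :=
  exists alpha : Lp,
    (forall beta, Rp beta alpha -> proj1_sig f beta = proj1_sig g beta) /\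
    Wlt R (proj1_sig f alpha) (proj1_sig g alpha).

Definition strict_linear_order {T : Type} (lt : T -> T -> Prop) : Prop :=
  (forall x, ~ lt x x) /\
  (forall x y z, lt x y -> lt y z -> lt x z) /\
  (forall x y, lt x y \/ x = y \/ lt y x).

(* open interval (a,b), None meaning an unbounded end *)
Definition in_interval {T : Type} (lt : T -> T -> Prop) (a b : option T) (x : T) : Prop :=
  (match a with None => True | Some a' => lt a' x end) /\
  (match b with None => True | Some b' => lt x b' end).

Definition ord_open {T : Type} (lt : T -> T -> Prop) (U : T -> Prop) : Prop :=
  forall x, U x -> exists a b : option T,
    in_interval lt a b x /\ forall y, in_interval lt a b y -> U y.

Definition subset {T : Type} (A B : T -> Prop) : Prop := forall x, A x -> B x.

Definition nonempty {T : Type} (A : T -> Prop) : Prop := exists x, A x.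

Definition non_archimedean {T : Type} (op : (T -> Prop) -> Prop) : Prop :=
  exists Bs : (T -> Prop) -> Prop,
    (forall B, Bs B -> op B) /\
    (forall U x, op U -> U x -> exists B, Bs B /\ B x /\ subset B U) /\
    (forall B1 B2, Bs B1 -> Bs B2 ->
       (forall x, ~ (B1 x /\ B2 x)) \/ subset B1 B2 \/ subset B2 B1).

(* strong Choquet game. Player I's moves are pairs (B_n, f_n).
   A strategy for II maps the list of I's moves so far (B_0,f_0),...,(B_n,f_n)
   to II's answer A_n. *)
Definition choquet_strategy (T : Type) : Type := list ((T -> Prop) * T) -> (T -> Prop).

Definition history {T : Type} (b : nat -> (T -> Prop) * T) (n : nat) : list ((T -> Prop) * T) :=
  map b (seq 0 (S n)).

Definition answer {T : Type} (s : choquet_strategy T) (b : nat -> (T -> Prop) * T) (n : nat)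
  : T -> Prop := s (history b n).

Definition legal_I {T : Type} (op : (T -> Prop) -> Prop) (s : choquet_strategy T)
  (b : nat -> (T -> Prop) * T) (n : nat) : Prop :=
  op (fst (b n)) /\ fst (b n) (snd (b n)) /\
  (forall m, n = S m -> subset (fst (b n)) (answer s b m)).

Definition strong_choquet {T : Type} (op : (T -> Prop) -> Prop) : Prop :=
  exists s : choquet_strategy T,
    (forall b n, (forall k, k <= n -> legal_I op s b k) ->
       op (answer s b n) /\ answer s b n (snd (b n)) /\ subset (answer s b n) (fst (b n))) /\
    (forall b, (forall n, legal_I op s b n) ->
       exists x, forall n, answer s b n x).

Definition dense {T : Type} (op : (T -> Prop) -> Prop) (D : T -> Prop) : Prop :=
  forall U, op U -> nonempty U -> exists x, U x /\ D x.

Definition baire {T : Type} (op : (T -> Prop) -> Prop) : Prop :=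
  forall D : nat -> T -> Prop, (forall n, op (D n) /\ dense op (D n)) ->
    dense op (fun x => forall n, D n x).

Definition discrete_subspace {T : Type} (op : (T -> Prop) -> Prop) (D : T -> Prop) : Prop :=
  forall x, D x -> exists U, op U /\ U x /\ forall y, U y -> D y -> y = x.

Definition dis_le {T : Type} (op : (T -> Prop) -> Prop) (I : Type) : Prop :=
  exists D : I -> T -> Prop,
    (forall i, discrete_subspace op (D i)) /\ (forall x, exists i, D i x).

Definition card_lt_Delta {T : Type} (op : (T -> Prop) -> Prop) (K : Type) : Prop :=
  forall U, op U -> nonempty U -> card_lt K { x : T | U x }.

(* Main.v *)
Require Import Defs.
From Stdlib Require Import List Arith Lia Classical ClassicalEpsilon FunctionalExtensionality ProofIrrelevance Wellfounded.

Lemma cle_refl A : card_le A A.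
Proof. exists (fun x => x). intros x y h; exact h. Qed.

Lemma cle_trans A B C : card_le A B -> card_le B C -> card_le A C.
Proof. intros [f hf] [g hg]. exists (fun x => g (f x)). intros x y h. apply hf, hg, h. Qed.

Lemma cle_prod A B C D : card_le A C -> card_le B D -> card_le (A*B) (C*D).
Proof. intros [f hf] [g hg]. exists (fun p => (f (fst p), g (snd p))).
  intros [a b] [c d] h. simpl in h. injection h; intros h1 h2. f_equal; auto. Qed.

Lemma cle_opt A B : card_le A B -> card_le (option A) (option B).
Proof. intros [f hf]. exists (fun o => match o with Some a => Some (f a) | None => None end).
  intros [a|] [b|] h; try discriminate; auto. injection h; intro; f_equal; auto. Qed.

Lemma cle_sig A (P : A -> Prop) : card_le {x | P x} A.
Proof. exists (@proj1_sig _ _). intros [x px] [y py]; simpl; intros ->. f_equal; apply proof_irrelevance. Qed.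

Lemma sig_eq {A} {P : A -> Prop} (a b : {x | P x}) : proj1_sig a = proj1_sig b -> a = b.
Proof. destruct a, b; simpl; intros ->; f_equal; apply proof_irrelevance. Qed.

Lemma choice_fun {A B} (P : A -> B -> Prop) : (forall a, exists b, P a b) -> exists f : A -> B, forall a, P a (f a).
Proof. intros H. exists (fun a => proj1_sig (constructive_indefinite_description _ (H a))).
  intros a. exact (proj2_sig (constructive_indefinite_description _ (H a))). Qed.

Lemma surj_cle {A B} (f : A -> B) : (forall b, exists a, f a = b) -> card_le B A.
Proof. intros H. destruct (choice_fun (fun b a => f a = b) H) as [g hg].
  exists g. intros x y h. rewrite <- (hg x), <- (hg y), h. reflexivity. Qed.

Lemma wf_min {T} (R : T -> T -> Prop) (P : T -> Prop) : well_founded R -> (exists x, P x) -> exists x, P x /\ forall y, R y x -> ~ P y.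
Proof.
  intros wf [x Px]. revert Px. induction x as [x IH] using (well_founded_ind wf).
  intros Px. destruct (classic (exists y, R y x /\ P y)) as [[y [Ry Py]]|N].
  - exact (IH y Ry Py).
  - exists x; split; auto. intros y Ry Py; apply N; eauto.
Qed.

Lemma strict_inj {A B} (RA : A -> A -> Prop) (RB : B -> B -> Prop) (f : A -> B) :
  well_order RA -> (forall x, ~ RB x x) -> (forall x y, RA x y -> RB (f x) (f y)) -> injective f.
Proof. intros [_ [_ [tot _]]] irr mono x y h. destruct (tot x y) as [l|[e|l]]; auto;
  apply mono in l; rewrite h in l; exfalso; eapply irr; eauto. Qed.

Definition shiftF {Y} (i : nat -> Y) (y : Y) : Y :=
  match excluded_middle_informative (exists n, i n = y) with
  | left H => i (S (proj1_sig (constructive_indefinite_description _ H)))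
  | right _ => y end.

Lemma shift_in {Y} (i : nat -> Y) n : injective i -> shiftF i (i n) = i (S n).
Proof. intros hi. unfold shiftF. destruct excluded_middle_informative as [H|H].
  - destruct (constructive_indefinite_description _ H) as [m hm]; simpl. apply hi in hm. subst; auto.
  - exfalso; apply H; eauto. Qed.

Lemma shift_out {Y} (i : nat -> Y) y : (forall n, i n <> y) -> shiftF i y = y.
Proof. intros hn. unfold shiftF. destruct excluded_middle_informative as [[n H]|H]; auto.
  exfalso; eapply hn; eauto. Qed.

Lemma opt_absorb Y : card_le nat Y -> card_le (option Y) Y.
Proof.
  intros [i hi]. exists (fun o => match o with None => i 0 | Some y => shiftF i y end).
  assert (K : forall y, (exists n, i n = y) \/ forall n, i n <> y).
  { intros y. destruct (classic (exists n, i n = y)); auto. right; intros n e; eauto. }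
  intros [a|] [b|] h.
  - destruct (K a) as [[n <-]|Ha], (K b) as [[m <-]|Hb].
    + rewrite !shift_in in h by auto. apply hi in h. injection h; intros ->; auto.
    + rewrite shift_in, shift_out in h by auto. exfalso; eapply Hb; eauto.
    + rewrite shift_in, shift_out in h by auto. exfalso; eapply Ha; eauto.
    + rewrite !shift_out in h by auto. subst; auto.
  - destruct (K a) as [[n <-]|Ha].
    + rewrite shift_in in h by auto. apply hi in h. discriminate.
    + rewrite shift_out in h by auto. exfalso; eapply Ha; eauto.
  - destruct (K b) as [[n <-]|Hb].
    + rewrite shift_in in h by auto. apply hi in h. discriminate.
    + rewrite shift_out in h by auto. exfalso; eapply Hb; eauto.
  - auto.
Qed.

Lemma nat_of_opt Y : card_le nat (option Y) -> card_le nat Y.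
Proof.
  intros [h hh].
  assert (Hy : exists y0 : Y, True).
  { destruct (h 0) as [y|] eqn:E0; [eauto|]. destruct (h 1) as [y|] eqn:E1; [eauto|].
    rewrite <- E1 in E0. apply hh in E0; discriminate. }
  destruct Hy as [y0 _].
  exists (fun n => match h (2*n) with Some y => y | None => match h (2*n+1) with Some y => y | None => y0 end end).
  intros n m e.
  destruct (h (2*n)) as [a|] eqn:A; destruct (h (2*m)) as [b|] eqn:B.
  - subst. rewrite <- B in A. apply hh in A; lia.
  - destruct (h (2*m+1)) as [c|] eqn:C.
    + subst. rewrite <- C in A. apply hh in A; lia.
    + rewrite <- C in B. apply hh in B; lia.
  - destruct (h (2*n+1)) as [c|] eqn:C.
    + subst. rewrite <- C in B. apply hh in B; lia.
    + rewrite <- C in A. apply hh in A; lia.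
  - rewrite <- B in A. apply hh in A; lia.
Qed.

Lemma php : forall N (f : nat -> nat), injective f -> (forall n, f n < N) -> False.
Proof.
  induction N; intros f hf hb.
  - specialize (hb 0); lia.
  - destruct (classic (exists i, f i = N)) as [[i0 Hi]|Hn].
    + apply (IHN (fun n => f (if lt_dec n i0 then n else S n))).
      * intros x y h. destruct (lt_dec x i0), (lt_dec y i0); apply hf in h; lia.
      * intros n. set (m := if lt_dec n i0 then n else S n).
        assert (m <> i0) by (unfold m; destruct (lt_dec n i0); lia).
        assert (f m <> N) by (intro e; rewrite <- Hi in e; apply hf in e; auto).
        specialize (hb m); lia.
    + apply (IHN f hf). intros n. specialize (hb n). assert (f n <> N) by (intro; apply Hn; eauto). lia.
Qed.

Lemma compare {A B} (RA : A -> A -> Prop) (RB : B -> B -> Prop) :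
  well_order RA -> well_order RB ->
  (exists f : A -> B, (forall x y, RA x y -> RB (f x) (f y)) /\
     ((forall b, exists a, f a = b) \/ exists b, forall a, RB (f a) b))
  \/ exists a, card_le B (segment RA a).
Proof.
  intros [irA [trA [totA wfA]]] [irB [trB [totB wfB]]].
  pose (F := fun x (rec : forall y, RA y x -> option B) =>
        match excluded_middle_informative (exists b, (forall y (h : RA y x), exists c, rec y h = Some c /\ RB c b) /\ forall b', RB b' b -> ~ (forall y (h : RA y x), exists c, rec y h = Some c /\ RB c b')) with
        | left H => Some (proj1_sig (constructive_indefinite_description _ H))
        | right _ => None end).
  pose (f := Fix wfA (fun _ => option B) F).
  assert (feq : forall x, f x = F x (fun y _ => f y)).
  { assert (ext : forall x0 (g1 g2 : forall y, RA y x0 -> option B), (forall y p, g1 y p = g2 y p) -> F x0 g1 = F x0 g2).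
    { intros x0 g1 g2 Hg.
      assert (g1 = g2) by (apply functional_extensionality_dep; intro y; apply functional_extensionality_dep; intro; apply Hg). subst; reflexivity. }
    intros x. exact (Fix_eq wfA (fun _ => option B) F ext x). }
  pose (Q := fun x b => forall y, RA y x -> exists c, f y = Some c /\ RB c b).
  assert (spec : forall x, (f x = None /\ forall b, ~ Q x b) \/ (exists c, f x = Some c /\ Q x c /\ forall b, RB b c -> ~ Q x b)).
  { intros x. rewrite feq. unfold F. destruct excluded_middle_informative as [H|H].
    - right. destruct (constructive_indefinite_description _ H) as [c [Pc Pm]]; simpl.
      exists c. split; [reflexivity|]. split.
      + intros y hy. exact (Pc y hy).
      + intros b hb Qb. apply (Pm b hb). intros y h; exact (Qb y h).
    - left. split; auto. intros b Qb. apply H.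
      destruct (wf_min RB (Q x) wfB (ex_intro _ b Qb)) as [c [Qc Mc]].
      exists c; split.
      + intros y h; exact (Qc y h).
      + intros b' hb' Qb'. apply (Mc b' hb'). intros y h; exact (Qb' y h). }
  assert (DC : forall x, (forall y, RA y x -> f y <> None) -> forall c, f x = Some c -> forall b, RB b c -> exists z, RA z x /\ f z = Some b).
  { intros x. induction x as [x IH] using (well_founded_ind wfA).
    intros Hd c Hc b hb.
    destruct (spec x) as [[N _]|[c' [E [_ M]]]]; [congruence|].
    rewrite Hc in E; injection E; intros <-.
    apply NNPP; intro N. apply (M b hb). intros y hy.
    destruct (f y) as [c'|] eqn:Ey; [|exfalso; apply (Hd y hy Ey)].
    exists c'; split; auto.
    destruct (totB c' b) as [l|[e|l]]; auto.
    - exfalso; apply N; subst; eauto.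
    - exfalso; apply N. destruct (IH y hy) with (c := c') (b := b) as [z [hz1 hz2]]; auto.
      + intros y' hy'; apply Hd; eauto.
      + exists z; split; eauto. }
  destruct (classic (forall x, f x <> None)) as [All|NAll].
  - left. assert (Hg : forall x, exists c, f x = Some c) by (intros x; destruct (f x) eqn:E; [eauto|exfalso; eapply All; eauto]).
    destruct (choice_fun _ Hg) as [g hg]. exists g. split.
    + intros x y hxy. destruct (spec y) as [[N _]|[c [E [Qc _]]]]; [exfalso; eapply All; eauto|].
      destruct (Qc x hxy) as [c' [E' R']]. rewrite hg in E, E'. congruence.
    + destruct (classic (forall b, exists a, g a = b)) as [S|S]; [left; auto|right].
      apply not_all_ex_not in S. destruct S as [b0 S]. exists b0. intros a.
      destruct (totB (g a) b0) as [l|[e|l]]; auto.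
      * exfalso; apply S; eauto.
      * exfalso. destruct (DC a (fun y _ => All y) (g a) (hg a) b0 l) as [z [_ hz]].
        apply S; exists z. rewrite hg in hz; congruence.
  - right. apply not_all_not_ex in NAll. 
    destruct (wf_min RA (fun x => f x = None) wfA) as [x0 [N0 M0]].
    { destruct NAll as [x Hx]. exists x. exact Hx. }
    exists x0.
    assert (Hall : forall b, exists y, RA y x0 /\ f y = Some b).
    { intros b. destruct (spec x0) as [[_ NQ]|[c [E _]]]; [|congruence].
      apply NNPP; intro N. apply (NQ b). intros y hy.
      destruct (f y) as [c|] eqn:Ey; [|exfalso; apply (M0 y hy Ey)].
      exists c; split; auto.
      destruct (totB c b) as [l|[e|l]]; auto.
      - exfalso; apply N; subst; eauto.
      - exfalso; apply N. destruct (DC y) with (c := c) (b := b) as [z [hz1 hz2]]; auto.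
        + intros y' hy'; apply M0; eauto.
        + exists z; split; eauto. }
    destruct (choice_fun _ Hall) as [h hh].
    exists (fun b => exist _ (h b) (proj1 (hh b))). intros b b' e.
    injection e; intro e'. pose proof (proj2 (hh b)) as E1. pose proof (proj2 (hh b')) as E2.
    rewrite e' in E1. congruence.
Qed.

Lemma sub_wo {T} (R : T -> T -> Prop) (P : T -> Prop) : well_order R -> well_order (fun a b : {x | P x} => R (proj1_sig a) (proj1_sig b)).
Proof. intros [ir [tr [tot wf]]]. split; [|split; [|split]].
  - intros x; apply ir.
  - intros x y z; apply tr.
  - intros x y. destruct (tot (proj1_sig x) (proj1_sig y)) as [l|[e|l]]; auto. right; left; apply sig_eq; auto.
  - apply (wf_inverse_image _ _ R (@proj1_sig _ _) wf).
Qed.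

Lemma inv_wo {A B} (R : B -> B -> Prop) (key : A -> B) : well_order R -> injective key -> well_order (fun x y => R (key x) (key y)).
Proof. intros [ir [tr [tot wf]]] hk. split; [|split; [|split]].
  - intros x; apply ir.
  - intros x y z; apply tr.
  - intros x y. destruct (tot (key x) (key y)) as [l|[e|l]]; auto.
  - apply (wf_inverse_image _ _ R key wf).
Qed.

Definition lex {A B} (RA : A -> A -> Prop) (RB : B -> B -> Prop) (p q : A * B) : Prop :=
  RA (fst p) (fst q) \/ (fst p = fst q /\ RB (snd p) (snd q)).

Lemma lex_wo {A B} (RA : A -> A -> Prop) (RB : B -> B -> Prop) : well_order RA -> well_order RB -> well_order (lex RA RB).
Proof. intros [irA [trA [totA wfA]]] [irB [trB [totB wfB]]]. unfold lex. split; [|split; [|split]].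
  - intros [a b] [h|[_ h]]; simpl in *; [apply (irA a)|apply (irB b)]; auto.
  - intros [a b] [c d] [e g]; simpl; intros [h|[-> h]] [h'|[-> h']]; eauto.
  - intros [a b] [c d]; simpl. destruct (totA a c) as [l|[->|l]]; auto.
    destruct (totB b d) as [l|[->|l]]; auto.
  - intros [a b]. revert b. induction a as [a IHa] using (well_founded_ind wfA).
    intros b. induction b as [b IHb] using (well_founded_ind wfB).
    constructor. intros [c d]; simpl; intros [h|[-> h]]; auto.
Qed.

Lemma nat_wo : well_order lt.
Proof. split; [|split; [|split]]; [intros; lia|intros; lia| |apply lt_wf].
  intros x y; destruct (lt_eq_lt_dec x y) as [[]|]; auto. Qed.

Lemma fin_bound {Y} (RY : Y -> Y -> Prop) : well_order RY -> ~ card_le nat Y -> exists n (h : Y -> nat), injective h /\ forall y, h y < n.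
Proof.
  intros wo N. destruct (compare RY lt wo nat_wo) as [[f [mono [S|[b B]]]]|[a Ha]].
  - exfalso. apply N. apply (surj_cle f S).
  - exists b, f. split; auto. apply (strict_inj RY lt f wo); auto. intros; lia.
  - exfalso. apply N. eapply cle_trans; [exact Ha|apply cle_sig].
Qed.

Lemma pair_code M a b c d : b < M -> d < M -> a*M+b = c*M+d -> a = c /\ b = d.
Proof. intros hb hd e. assert (a = c).
  { destruct (lt_eq_lt_dec a c) as [[l|l]|l]; auto; exfalso; nia. } subst. split; auto; lia. Qed.

Lemma godel_step {T} (R : T->T->Prop) (P : T -> Prop) : well_order R ->
  card_le nat {z | P z} ->
  (forall x, P x -> ~ card_le {z | P z} (segment R x)) ->
  (forall x, P x -> card_le nat (segment R x) -> card_le (segment R x * segment R x) (segment R x)) ->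
  card_le ({z|P z} * {z|P z}) {z | P z}.
Proof.
  intros wo Hnat Hcard IH.
  pose proof (sub_wo R P wo) as woW.
  set (W := {z | P z}) in *.
  set (RW := fun a b : W => R (proj1_sig a) (proj1_sig b)) in *.
  destruct wo as [ir [tr [tot wf]]].
  pose (mx := fun a b : W => if excluded_middle_informative (RW a b) then b else a).
  pose (key := fun p : W * W => (mx (fst p) (snd p), p)).
  assert (kinj : injective key) by (intros p q h; unfold key in h; injection h; auto).
  pose proof (inv_wo _ key (lex_wo _ _ woW (lex_wo _ _ woW woW)) kinj) as woG.
  destruct (compare _ RW woG woW) as [[f [mono _]]|[p Hp]].
  - exists f. eapply strict_inj; [exact woG| |exact mono]. intros x; apply ir.
  - exfalso.
    set (m := mx (fst p) (snd p)).
    pose (le := fun x y : W => RW x y \/ x = y).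
    assert (mx1 : forall a b, le a (mx a b)).
    { intros a b; unfold mx, le; destruct excluded_middle_informative; auto. }
    assert (mx2 : forall a b, le b (mx a b)).
    { intros a b; unfold mx, le; destruct excluded_middle_informative as [h|h]; auto.
      destruct (tot (proj1_sig a) (proj1_sig b)) as [l|[e|l]]; auto.
      - contradiction. - right; apply sig_eq; auto. }
    assert (letr : forall a b c, le a b -> le b c -> le a c).
    { unfold le, RW; intros a b c [h| ->] [h'| ->]; eauto. }
    pose (emb := fun c : W => match excluded_middle_informative (RW c m) with
                  | left h => Some (exist (fun y => R y (proj1_sig m)) (proj1_sig c) h)
                  | right _ => None end).
    assert (embi : forall c d, le c m -> le d m -> emb c = emb d -> c = d).
    { intros c d hc hd. unfold emb.
      destruct excluded_middle_informative as [h1|h1]; destruct excluded_middle_informative as [h2|h2]; intros e; try discriminate.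
      - injection e; intro; apply sig_eq; auto.
      - destruct hc as [hc|hc]; [contradiction|]. destruct hd as [hd|hd]; [contradiction|]. congruence. }
    assert (Hseg : card_le (segment (fun x y => lex RW (lex RW RW) (key x) (key y)) p)
                           (option (segment R (proj1_sig m)) * option (segment R (proj1_sig m)))).
    { exists (fun q => (emb (fst (proj1_sig q)), emb (snd (proj1_sig q)))).
      assert (bnd : forall q : segment (fun x y => lex RW (lex RW RW) (key x) (key y)) p,
                 le (fst (proj1_sig q)) m /\ le (snd (proj1_sig q)) m).
      { intros [[a b] hq]; simpl. unfold lex, key in hq; simpl in hq.
        assert (le (mx a b) m) by (destruct hq as [h|[h _]]; [left; exact h|right; exact h]).
        split; [apply (letr _ (mx a b)); auto|apply (letr _ (mx a b)); auto]. }
      intros q1 q2 e. injection e; intros e2 e1.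
      destruct (bnd q1), (bnd q2).
      apply embi in e1; auto. apply embi in e2; auto.
      apply sig_eq. destruct (proj1_sig q1), (proj1_sig q2); simpl in *; subst; auto. }
    pose proof (cle_trans _ _ _ Hp Hseg) as HW.
    destruct (classic (card_le nat (segment R (proj1_sig m)))) as [Inf|Fin].
    + apply (Hcard (proj1_sig m) (proj2_sig m)).
      eapply cle_trans; [exact HW|]. eapply cle_trans; [apply cle_prod; apply opt_absorb; exact Inf|].
      apply IH; auto. exact (proj2_sig m).
    + destruct (fin_bound _ (sub_wo R (fun y => R y (proj1_sig m)) (conj ir (conj tr (conj tot wf)))) Fin) as [n [h [hi hb]]].
      pose (k := fun o : option (segment R (proj1_sig m)) => match o with Some y => h y | None => n end).
      destruct (cle_trans _ _ _ Hnat HW) as [g hg].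
      assert (kb : forall o, k o < S n) by (intros [a|]; simpl; [specialize (hb a)|]; lia).
      apply (php (S n * S n) (fun i => k (fst (g i)) * S n + k (snd (g i)))).
      * intros i j e. apply pair_code in e; [|apply kb|apply kb].
        destruct e as [e1 e2]. apply hg.
        assert (kk : forall o1 o2, k o1 = k o2 -> o1 = o2).
        { intros [a|] [b|]; simpl; intros e; auto.
          - f_equal; apply hi; auto. - specialize (hb a); lia. - specialize (hb b); lia. }
        destruct (g i), (g j); simpl in *. f_equal; apply kk; auto.
      * intros i. pose proof (kb (fst (g i))). pose proof (kb (snd (g i))). nia.
Qed.

Lemma hess {T} (R : T -> T -> Prop) : well_order R -> card_le nat T -> (forall x, ~ card_le T (segment R x)) -> card_le (T*T) T.
Proof.
  intros wo Hn Hc.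
  assert (A : forall x, card_le nat (segment R x) -> card_le (segment R x * segment R x) (segment R x)).
  { destruct wo as [ir [tr [tot wf]]] eqn:Ewo.
    intros x. induction x as [x IH] using (well_founded_ind wf). intros Hx.
    destruct (classic (exists y, R y x /\ card_le (segment R x) (segment R y))) as [[y [ryx Hc']]|N].
    - assert (inc : card_le (segment R y) (segment R x)).
      { exists (fun z => exist (fun w => R w x) (proj1_sig z) (tr _ _ _ (proj2_sig z) ryx)).
        intros a b e. injection e; intros; apply sig_eq; auto. }
      eapply cle_trans; [apply cle_prod; exact Hc'|].
      eapply cle_trans; [apply IH; auto; eapply cle_trans; eauto|exact inc].
    - apply (godel_step R (fun z => R z x) wo); auto.
      intros y hy hc. apply N; eauto. }
  assert (B := godel_step R (fun _ => True) wo).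
  assert (e1 : card_le T {z : T | True}) by (exists (fun z => exist _ z I); intros a b e; injection e; auto).
  eapply cle_trans; [apply cle_prod; exact e1|]. eapply cle_trans; [apply B|apply cle_sig].
  - eapply cle_trans; eauto.
  - intros x _ h. apply (Hc x). eapply cle_trans; eauto.
  - intros; auto.
Qed.

Lemma dchoice {A} {B : A -> Type} (P : forall a, B a -> Prop) : (forall a, exists b, P a b) -> exists f : forall a, B a, forall a, P a (f a).
Proof. intros H. exists (fun a => proj1_sig (constructive_indefinite_description _ (H a))).
  intros a. exact (proj2_sig (constructive_indefinite_description _ (H a))). Qed.

Definition embo {T} (R : T -> T -> Prop) (a b : T) : option (segment R a) :=
  match excluded_middle_informative (R b a) with
  | left h => Some (exist _ b h) | right _ => None end.

Lemma embo_inj {T} (R : T -> T -> Prop) a b c : (R b a \/ b = a) -> (R c a \/ c = a) -> embo R a b = embo R a c -> b = c.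
Proof. unfold embo. intros hb hc.
  destruct excluded_middle_informative as [h1|h1]; destruct excluded_middle_informative as [h2|h2]; intros e; try discriminate.
  - injection e; auto.
  - destruct hb as [hb|hb]; [contradiction|]. destruct hc as [hc|hc]; [contradiction|]. congruence. Qed.

Lemma cofinal_cle {T I Y} (R : T -> T -> Prop) (s : I -> T) :
  (forall x, exists i, R x (s i) \/ x = s i) -> (forall i, card_le (segment R (s i)) Y) -> card_le T (I * option Y).
Proof.
  intros cof hs. destruct (dchoice (fun i (h : segment R (s i) -> Y) => injective h) hs) as [h hh].
  assert (Hq : forall x, exists q : I * option Y, (snd q = None /\ x = s (fst q)) \/ exists p : R x (s (fst q)), snd q = Some (h (fst q) (exist _ x p))).
  { intros x. destruct (cof x) as [i [p|e]].
    - exists (i, Some (h i (exist _ x p))). right. exists p. reflexivity.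
    - exists (i, None). left; auto. }
  destruct (choice_fun _ Hq) as [q hq]. exists q. intros x y e.
  pose proof (hq x) as H1; pose proof (hq y) as H2. destruct (q x) as [i o]; destruct (q y) as [j o'].
  simpl in *. injection e; intros; subst.
  destruct H1 as [[n1 e1]|[p1 e1]]; destruct H2 as [[n2 e2]|[p2 e2]]; try congruence.
  rewrite e1 in e2. injection e2; intro e3. apply hh in e3. injection e3; auto.
Qed.

Lemma seg_opt {T} (R : T -> T -> Prop) : infinite_cardinal R -> forall x, ~ card_le T (option (segment R x)).
Proof. intros [wo [hn hc]] x h. apply (hc x). eapply cle_trans; [exact h|]. apply opt_absorb.
  apply nat_of_opt. eapply cle_trans; eauto. Qed.

Lemma cle_sum A B C : card_le A C -> card_le B C -> card_le (A + B) (bool * C).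
Proof. intros [f hf] [g hg]. exists (fun x => match x with inl a => (true, f a) | inr b => (false, g b) end).
  intros [a|b] [a'|b'] e; injection e; intros; try discriminate; f_equal; auto. Qed.

Lemma cle_bool_nat : card_le bool nat.
Proof. exists (fun b : bool => if b then 0 else 1). intros [] [] e; simpl in e; auto; discriminate. Qed.

Lemma inf_LL {L} (RL : L -> L -> Prop) : infinite_cardinal RL -> card_le (L*L) L.
Proof. intros [wo [hn hc]]. apply (hess RL); auto. Qed.

Lemma inf_opt {L} (RL : L -> L -> Prop) : infinite_cardinal RL -> card_le (option L) L.
Proof. intros [wo [hn hc]]. apply opt_absorb; auto. Qed.

Lemma inf_bool {L} (RL : L -> L -> Prop) : infinite_cardinal RL -> card_le (bool * L) L.
Proof. intros h. eapply cle_trans; [|apply (inf_LL _ h)]. apply cle_prod; [|apply cle_refl].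
  eapply cle_trans; [apply cle_bool_nat|apply (proj1 (proj2 h))]. Qed.

Lemma inf_IoptL {L I} (RL : L -> L -> Prop) : infinite_cardinal RL -> card_le I L -> card_le (I * option L) L.
Proof. intros h hi. eapply cle_trans; [|apply (inf_LL _ h)]. apply cle_prod; auto. apply (inf_opt _ h). Qed.

Lemma Lp_nomax {L Lp} (RL : L -> L -> Prop) (RLp : Lp -> Lp -> Prop) :
  infinite_cardinal RL -> successor_cardinal_of L RLp -> forall a, exists b, RLp a b.
Proof.
  intros hL [wo [[_ nle] hs]] a. apply NNPP; intro N. apply nle.
  destruct wo as [ir [tr [tot wf]]].
  assert (le : forall b, RLp b a \/ b = a).
  { intros b. destruct (tot b a) as [l|[e|l]]; auto. exfalso; apply N; eauto. }
  eapply cle_trans; [|apply (inf_opt _ hL)].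
  eapply cle_trans; [|apply cle_opt; apply (hs a)].
  exists (embo RLp a). intros x y e. apply embo_inj in e; auto.
Qed.

Lemma Lp_le_K {K L Lp} (RK : K -> K -> Prop) (RLp : Lp -> Lp -> Prop) :
  infinite_cardinal RK -> successor_cardinal_of L RLp -> card_lt L K -> card_le Lp K.
Proof.
  intros [woK _] [wo [_ hs]] [_ nle].
  destruct (compare RLp RK wo woK) as [[f [mono _]]|[a Ha]].
  - exists f. eapply strict_inj; eauto. apply woK.
  - exfalso. apply nle. eapply cle_trans; eauto.
Qed.

Lemma K_not_le_Lp {K L Lp} (RK : K -> K -> Prop) (RL : L -> L -> Prop) (RLp : Lp -> Lp -> Prop) :
  infinite_cardinal RK -> infinite_cardinal RL -> successor_cardinal_of L RLp -> cof_le RK L -> card_lt L K -> ~ card_le K Lp.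
Proof.
  intros hK hL [wo [_ hs]] [g hg] [_ nle] e.
  assert (Hs : forall i, card_le (segment RK (g i)) L).
  { intros i. destruct (compare RLp _ wo (sub_wo RK (fun y => RK y (g i)) (proj1 hK))) as [[f [mono _]]|[a Ha]].
    - exfalso. apply (proj2 (proj2 hK) (g i)). eapply cle_trans; [exact e|].
      exists f. apply (strict_inj RLp (fun a b : {y | RK y (g i)} => RK (proj1_sig a) (proj1_sig b)) f); auto. intros x; apply (proj1 (proj1 hK)).
    - eapply cle_trans; eauto. }
  apply nle. eapply cle_trans; [apply (@cofinal_cle K L L RK g); [|exact Hs]|].
  - intros x. destruct (hg x) as [i hi]. eauto.
  - apply (inf_IoptL RL); auto. apply cle_refl.
Qed.

Lemma Lp_bound {L Lp} (RL : L -> L -> Prop) (RLp : Lp -> Lp -> Prop) :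
  infinite_cardinal RL -> successor_cardinal_of L RLp -> forall al : nat -> Lp, exists b, forall n, RLp (al n) b.
Proof.
  intros hL [wo [[_ nle] hs]] al. apply NNPP; intro N. apply nle.
  destruct wo as [ir [tr [tot wf]]].
  assert (cof : forall b, exists n, RLp b (al n) \/ b = al n).
  { intros b. apply NNPP; intro M. apply N. exists b. intros n.
    destruct (tot (al n) b) as [l|[e'|l]]; auto; exfalso; apply M; eauto. }
  eapply cle_trans; [apply (cofinal_cle RLp al cof (fun n => hs (al n)))|]. apply (inf_IoptL RL); auto. apply hL.
Qed.

Lemma positions {L Lp} (RL : L -> L -> Prop) (RLp : Lp -> Lp -> Prop) :
  infinite_cardinal RL -> successor_cardinal_of L RLp -> forall a : Lp,
  exists p : L -> Lp, injective p /\ (forall i, RLp a (p i)) /\ exists b, forall i, RLp (p i) b.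
Proof.
  intros hL hLp a. pose proof hLp as [wo [[_ nle] hs]].
  pose proof (sub_wo RLp (fun g => RLp a g) wo) as woA.
  assert (AL : card_le {g | RLp a g} L -> False).
  { intros hA. apply nle. destruct wo as [ir [tr [tot wf]]].
    eapply cle_trans; [|apply (inf_bool _ hL)].
    eapply cle_trans; [|apply cle_sum; [eapply cle_trans; [apply cle_opt; apply (hs a)|apply (inf_opt _ hL)]|exact hA]].
    exists (fun b => match excluded_middle_informative (RLp a b) with left h => inr (exist _ b h) | right _ => inl (embo RLp a b) end).
    intros x y e.
    destruct excluded_middle_informative as [h1|h1]; destruct excluded_middle_informative as [h2|h2]; try discriminate.
    - injection e; auto.
    - injection e; intro e'. apply embo_inj in e'; auto.
      + destruct (tot x a) as [l|[l|l]]; auto; contradiction.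
      + destruct (tot y a) as [l|[l|l]]; auto; contradiction. }
  destruct (compare RL _ (proj1 hL) woA) as [[f [mono [S|[b B]]]]|[c Hc]].
  - exfalso. apply AL. apply (surj_cle f S).
  - exists (fun i => proj1_sig (f i)). split; [|split].
    + intros i j e. apply sig_eq in e. revert e. apply (strict_inj RL (fun a0 b : {x : Lp | RLp a x} => RLp (proj1_sig a0) (proj1_sig b)) f (proj1 hL)); auto. intros x; apply wo.
    + intros i; exact (proj2_sig (f i)).
    + exists (proj1_sig b). exact B.
  - exfalso. apply AL. eapply cle_trans; [exact Hc|]. eapply cle_trans; [apply cle_sig|]. apply cle_refl.
Qed.

Lemma konig {K L} (RK : K -> K -> Prop) : infinite_cardinal RK -> cof_le RK L -> ~ card_le (L -> K) K.
Proof.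
  intros hK [g hg] [e he].
  assert (H : forall i, exists k, forall psi, (RK (e psi) (g i) \/ e psi = g i) -> psi i <> k).
  { intros i. apply NNPP; intro N.
    assert (H2 : forall k, exists psi, (RK (e psi) (g i) \/ e psi = g i) /\ psi i = k).
    { intros k. apply NNPP; intro M. apply N. exists k. intros psi hp hk. apply M; eauto. }
    destruct (choice_fun _ H2) as [ps hps].
    apply (seg_opt RK hK (g i)). exists (fun k => embo RK (g i) (e (ps k))).
    intros k k' ee. apply embo_inj in ee; try apply hps. apply he in ee.
    rewrite <- (proj2 (hps k)), <- (proj2 (hps k')), ee; auto. }
  destruct (choice_fun _ H) as [phi hphi].
  destruct (hg (e phi)) as [i hi]. exact (hphi i phi hi eq_refl).
Qed.

Definition leR {T} (R : T -> T -> Prop) x y := R x y \/ x = y.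

Lemma le_trans' {T} (R : T -> T -> Prop) : well_order R -> forall x y z, leR R x y -> leR R y z -> leR R x z.
Proof. intros [ir [tr _]] x y z [h| ->] [h'| ->]; unfold leR; eauto. Qed.
Lemma le_lt {T} (R : T -> T -> Prop) : well_order R -> forall x y z, leR R x y -> R y z -> R x z.
Proof. intros [ir [tr _]] x y z [h| ->] h'; eauto. Qed.
Lemma lt_le {T} (R : T -> T -> Prop) : well_order R -> forall x y z, R x y -> leR R y z -> R x z.
Proof. intros [ir [tr _]] x y z h [h'| ->]; eauto. Qed.
Lemma nlt_le {T} (R : T -> T -> Prop) : well_order R -> forall x y, ~ R x y -> leR R y x.
Proof. intros [ir [tr [tot _]]] x y h. destruct (tot x y) as [l|[e|l]]; unfold leR; auto; contradiction. Qed.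
Lemma lt_nle {T} (R : T -> T -> Prop) : well_order R -> forall x y, R x y -> ~ leR R y x.
Proof. intros [ir [tr _]] x y h [h'| ->]; eapply ir; eauto. Qed.
Lemma le_refl' {T} (R : T -> T -> Prop) x : leR R x x.
Proof. right; auto. Qed.

Definition mxR {T} (R : T -> T -> Prop) x y := if excluded_middle_informative (R x y) then y else x.
Lemma mx1 {T} (R : T -> T -> Prop) x y : leR R x (mxR R x y).
Proof. unfold mxR, leR; destruct excluded_middle_informative; auto. Qed.
Lemma mx2 {T} (R : T -> T -> Prop) : well_order R -> forall x y, leR R y (mxR R x y).
Proof. intros wo x y; unfold mxR, leR; destruct excluded_middle_informative as [h|h]; auto.
  destruct (nlt_le R wo _ _ h); auto. Qed.

Notation vX f := (proj1_sig f).

Definition Cb {K Lp} (RK : K -> K -> Prop) (RLp : Lp -> Lp -> Prop) (f : Xspace RK RLp) (al : Lp) (g : Xspace RK RLp) : Prop :=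
  forall b, leR RLp b al -> vX g b = vX f b.

Lemma X_eq {K Lp} (RK : K -> K -> Prop) (RLp : Lp -> Lp -> Prop) (f g : Xspace RK RLp) : (forall b, vX f b = vX g b) -> f = g.
Proof. intros h. apply sig_eq. apply functional_extensionality; auto. Qed.

Lemma zero_unique {K} (RK : K -> K -> Prop) : well_order RK -> forall z z', is_zero RK z -> is_zero RK z' -> z = z'.
Proof. intros [_ [_ [tot _]]] z z' h h'. destruct (tot z z') as [l|[e|l]]; auto; [apply h' in l|apply h in l]; contradiction. Qed.

Lemma Wlt_irr {K} (RK : K -> K -> Prop) : well_order RK -> forall a, ~ Wlt RK a a.
Proof. intros [ir _] [a|]; simpl; auto. Qed.
Lemma Wlt_trans {K} (RK : K -> K -> Prop) : well_order RK -> forall a b c, Wlt RK a b -> Wlt RK b c -> Wlt RK a c.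
Proof. intros [ir [tr _]] [a|] [b|] [c|]; simpl; eauto; tauto. Qed.
Lemma Wlt_tot {K} (RK : K -> K -> Prop) : well_order RK -> forall a b, Wlt RK a b \/ a = b \/ Wlt RK b a.
Proof. intros [ir [tr [tot _]]] [a|] [b|]; simpl; auto. destruct (tot a b) as [l|[->|l]]; auto. Qed.

Lemma lex_slo {K Lp} (RK : K -> K -> Prop) (RLp : Lp -> Lp -> Prop) : well_order RK -> well_order RLp -> strict_linear_order (lex_lt RK RLp).
Proof.
  intros woK woL. pose proof woL as [ir [tr [tot wf]]]. split; [|split].
  - intros x [a [_ h]]. exact (Wlt_irr RK woK _ h).
  - intros x y z [a [ha1 ha2]] [b [hb1 hb2]].
    destruct (tot a b) as [l|[<-|l]].
    + exists a; split. * intros c hc. rewrite ha1 by auto. apply hb1; eauto. * rewrite <- (hb1 a l); auto.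
    + exists a; split. * intros c hc. rewrite ha1, hb1; auto. * eapply Wlt_trans; eauto.
    + exists b; split. * intros c hc. rewrite ha1, hb1; eauto. * rewrite (ha1 b l); auto.
  - intros x y. destruct (classic (exists a, proj1_sig x a <> proj1_sig y a)) as [H|H].
    + destruct (wf_min RLp _ wf H) as [a [ha hm]].
      assert (agr : forall c, RLp c a -> proj1_sig x c = proj1_sig y c) by (intros c hc; apply NNPP; eapply hm; eauto).
      destruct (Wlt_tot RK woK (proj1_sig x a) (proj1_sig y a)) as [l|[e|l]].
      * left; exists a; auto.
      * contradiction.
      * right; right; exists a; split; auto. intros c hc; symmetry; auto.
    + right; left. apply sig_eq. apply functional_extensionality. intros a. apply NNPP; intro N; apply H; eauto.
Qed.

Lemma sandwich {K Lp} (RK : K -> K -> Prop) (RLp : Lp -> Lp -> Prop) : well_order RK -> well_order RLp ->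
  forall (a y b h : Xspace RK RLp) d, lex_lt RK RLp a y -> lex_lt RK RLp y b ->
  (forall c, RLp c d -> vX a c = vX h c /\ vX b c = vX h c) -> forall c, RLp c d -> vX y c = vX h c.
Proof.
  intros woK woL a y b h d [e1 [h1 w1]] [e2 [h2 w2]] hab c hc. pose proof woL as [ir [tr [tot wf]]].
  destruct (classic (RLp e1 d)) as [l1|l1].
  2:{ rewrite <- h1. apply hab; auto. destruct (nlt_le _ woL _ _ l1) as [l| ->]; eauto. }
  destruct (classic (RLp e2 d)) as [l2|l2].
  2:{ rewrite h2. apply hab; auto. destruct (nlt_le _ woL _ _ l2) as [l| ->]; eauto. }
  exfalso. destruct (hab e1 l1) as [a1 b1]. destruct (hab e2 l2) as [a2 b2].
  destruct (tot e1 e2) as [l|[<-|l]].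
  - rewrite (h2 e1 l), b1, <- a1 in w1. exact (Wlt_irr RK woK _ w1).
  - rewrite a1 in w1. rewrite b1 in w2. exact (Wlt_irr RK woK _ (Wlt_trans RK woK _ _ _ w1 w2)).
  - rewrite <- (h1 e2 l), a2, <- b2 in w2. exact (Wlt_irr RK woK _ w2).
Qed.

Definition updf {Lp V} (h : Lp -> V) (d : Lp) (v : V) : Lp -> V :=
  fun b => if excluded_middle_informative (b = d) then v else h b.

Lemma zero_pos {K} (RK : K -> K -> Prop) : infinite_cardinal RK -> forall z, is_zero RK z -> exists k, RK z k.
Proof. intros [[ir [tr [tot wf]]] [[i hi] _]] z hz.
  destruct (classic (i 0 = z)) as [e|e].
  - exists (i 1). destruct (tot z (i 1)) as [l|[l|l]]; auto.
    + rewrite <- e in l. apply hi in l; discriminate.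
    + apply hz in l; contradiction.
  - exists (i 0). destruct (tot z (i 0)) as [l|[l|l]]; auto.
    + congruence. + apply hz in l; contradiction.
Qed.

Lemma C_open {K L Lp} (RK : K -> K -> Prop) (RL : L -> L -> Prop) (RLp : Lp -> Lp -> Prop) :
  infinite_cardinal RK -> infinite_cardinal RL -> successor_cardinal_of L RLp ->
  forall f al, ord_open (lex_lt RK RLp) (Cb RK RLp f al).
Proof.
  intros hK hL hLp f al h hh. pose proof (proj1 hK) as woK. pose proof (proj1 hLp) as woL.
  pose proof woL as [ir [tr [tot wf]]].
  destruct (proj2_sig h) as [g hg].
  set (m := mxR RLp al g).
  destruct (Lp_nomax RL RLp hL hLp m) as [d hd].
  destruct (Lp_nomax RL RLp hL hLp d) as [e he].
  assert (gd : ~ RLp d g).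
  { intro c. apply (ir d). apply (tr d g d c). exact (le_lt RLp woL g m d (mx2 RLp woL al g) hd). }
  destruct (hg d gd) as [z [hz1 hz2]].
  destruct (zero_pos RK hK z hz2) as [k1 hk1].
  assert (supp : forall v, bounded_support RK RLp (updf (proj1_sig h) d v)).
  { intros v. exists e. intros b hb. unfold updf. destruct excluded_middle_informative as [->|n]; [contradiction|].
    apply hg. intro c. apply hb. eapply lt_le; [eauto|exact c|]. left. eapply le_lt; eauto.
    eapply le_trans'; [eauto| |left; exact hd]. apply mx2; auto. }
  exists (Some (exist _ _ (supp None))), (Some (exist _ _ (supp (Some k1)))). split.
  - split; simpl.
    + exists d. split.
      * intros c hc. cbn. unfold updf. destruct excluded_middle_informative as [->|n]; auto. exfalso; eapply ir; eauto.
      * cbn. unfold updf. destruct excluded_middle_informative as [_|n]; [|congruence]. rewrite hz1; simpl; auto.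
    + exists d. split.
      * intros c hc. cbn. unfold updf. destruct excluded_middle_informative as [->|n]; auto. exfalso; eapply ir; eauto.
      * cbn. unfold updf. destruct excluded_middle_informative as [_|n]; [|congruence]. rewrite hz1; simpl; auto.
  - intros y [ly uy].
    pose proof (sandwich RK RLp woK woL _ y _ h d ly uy) as S.
    intros b hb. rewrite S.
    + apply hh; auto.
    + intros c hc; simpl; unfold updf; destruct excluded_middle_informative as [->|n]; [exfalso; eapply ir; eauto|auto].
    + apply (le_lt RLp woL b m d); [eapply le_trans'; [exact woL|exact hb|apply mx1]|exact hd].
Qed.

Lemma C_refl {K Lp} (RK : K -> K -> Prop) (RLp : Lp -> Lp -> Prop) f al : Cb RK RLp f al f.
Proof. intros b _; auto. Qed.

Lemma C_nest {K Lp} (RK : K -> K -> Prop) (RLp : Lp -> Lp -> Prop) : well_order RLp ->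
  forall f g al al', Cb RK RLp f al g -> leR RLp al al' -> subset (Cb RK RLp g al') (Cb RK RLp f al).
Proof. intros wo f g al al' hg hl x hx b hb. rewrite hx. apply hg; auto. eapply le_trans'; eauto. Qed.

Lemma basis {K Lp} (RK : K -> K -> Prop) (RLp : Lp -> Lp -> Prop) : well_order RK -> well_order RLp ->
  forall U f b0, ord_open (lex_lt RK RLp) U -> U f -> exists al, leR RLp b0 al /\ subset (Cb RK RLp f al) U.
Proof.
  intros woK woL U f b0 hU hf. destruct (hU f hf) as [a [b [[ha hb] hab]]].
  assert (lo : exists e, forall g, Cb RK RLp f e g -> match a with None => True | Some a' => lex_lt RK RLp a' g end).
  { destruct a as [a'|]; [|exists b0; auto].
    destruct ha as [e [he1 he2]]. exists e. intros g hg. exists e. split.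
    - intros c hc. rewrite he1 by auto. symmetry. apply hg. left; auto.
    - rewrite (hg e (le_refl' _ _)). auto. }
  assert (up : exists e, forall g, Cb RK RLp f e g -> match b with None => True | Some b' => lex_lt RK RLp g b' end).
  { destruct b as [b'|]; [|exists b0; auto].
    destruct hb as [e [he1 he2]]. exists e. intros g hg. exists e. split.
    - intros c hc. rewrite <- he1 by auto. apply hg. left; auto.
    - rewrite (hg e (le_refl' _ _)). auto. }
  destruct lo as [e1 H1]. destruct up as [e2 H2].
  exists (mxR RLp b0 (mxR RLp e1 e2)). split; [apply mx1|].
  intros g hg. apply hab. split.
  - apply H1. eapply C_nest; [exact woL|apply C_refl| |exact hg]. eapply le_trans'; [eauto|apply mx1|apply mx2; auto].
  - apply H2. eapply C_nest; [exact woL|apply C_refl| |exact hg]. eapply le_trans'; [eauto|apply mx2; auto|apply mx2; auto].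
Qed.

Lemma limit {K L Lp} (RK : K -> K -> Prop) (RL : L -> L -> Prop) (RLp : Lp -> Lp -> Prop) :
  infinite_cardinal RK -> infinite_cardinal RL -> successor_cardinal_of L RLp ->
  forall (fs : nat -> Xspace RK RLp) (als : nat -> Lp),
  (forall n m, n <= m -> Cb RK RLp (fs n) (als n) (fs m)) -> exists x, forall n, Cb RK RLp (fs n) (als n) x.
Proof.
  intros hK hL hLp fs als H. pose proof (proj1 hLp) as woL. pose proof (proj1 hK) as woK.
  destruct (Lp_bound RL RLp hL hLp als) as [bd hbd].
  destruct (wf_min RK (fun _ => True) (proj2 (proj2 (proj2 woK)))) as [z0 [_ hz0]].
  { destruct (proj1 (proj2 hK)) as [i _]. exists (i 0); auto. }
  assert (hz : is_zero RK z0) by (intros y hy; eapply hz0; eauto).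
  pose (x := fun c => match excluded_middle_informative (exists n, leR RLp c (als n)) with
            | left H => proj1_sig (fs (proj1_sig (constructive_indefinite_description _ H))) c
            | right _ => Some z0 end).
  assert (sx : bounded_support RK RLp x).
  { exists bd. intros c hc. unfold x. destruct excluded_middle_informative as [[n hn]|n].
    - exfalso. apply hc. eapply le_lt; eauto.
    - eauto. }
  exists (exist _ x sx). intros n c hc. simpl. unfold x.
  destruct excluded_middle_informative as [Hn|Hn]; [|exfalso; eauto].
  destruct (constructive_indefinite_description _ Hn) as [k hk]; simpl.
  destruct (le_ge_dec k n) as [l|l].
  - symmetry. apply (H k n l); auto.
  - apply (H n k l); auto.
Qed.

Lemma open_ext {T} (lt : T -> T -> Prop) (U V : T -> Prop) : (forall x, U x <-> V x) -> ord_open lt V -> ord_open lt U.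
Proof. intros e hV x hx. destruct (hV x (proj1 (e x) hx)) as [a [b [h1 h2]]]. exists a, b; split; auto. intros y hy; apply e; auto. Qed.

Lemma nonarch {K L Lp} (RK : K -> K -> Prop) (RL : L -> L -> Prop) (RLp : Lp -> Lp -> Prop) :
  infinite_cardinal RK -> infinite_cardinal RL -> successor_cardinal_of L RLp ->
  non_archimedean (ord_open (lex_lt RK RLp)).
Proof.
  intros hK hL hLp. pose proof (proj1 hK) as woK; pose proof (proj1 hLp) as woL.
  exists (fun B => exists f al, forall x, B x <-> Cb RK RLp f al x). split; [|split].
  - intros B [f [al e]]. eapply open_ext; eauto. eapply C_open; eauto.
  - intros U x hU hx. destruct (proj2_sig x) as [g _].
    destruct (basis RK RLp woK woL U x g hU hx) as [al [_ hs]].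
    exists (Cb RK RLp x al). split; [exists x, al; tauto|split; auto]. apply C_refl.
  - intros B1 B2 [f1 [a1 e1]] [f2 [a2 e2]].
    assert (gen : forall f1 a1 f2 a2, leR RLp a1 a2 ->
       (forall x, ~ (Cb RK RLp f1 a1 x /\ Cb RK RLp f2 a2 x)) \/ subset (Cb RK RLp f2 a2) (Cb RK RLp f1 a1)).
    { intros g1 b1 g2 b2 hl. destruct (classic (Cb RK RLp g1 b1 g2)) as [c|c].
      - right. eapply C_nest; eauto.
      - left. intros x [h1 h2]. apply c. intros b hb. rewrite <- (h2 b), (h1 b); auto. eapply le_trans'; eauto. }
    destruct (proj1 (proj2 (proj2 woL)) a1 a2) as [l|[l|l]].
    + destruct (gen f1 a1 f2 a2 (or_introl l)) as [d|s].
      * left. intros x [h1 h2]. apply (d x); split; [apply e1|apply e2]; auto.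
      * right; right. intros x hx. apply e1, s, e2, hx.
    + destruct (gen f1 a1 f2 a2 (or_intror l)) as [d|s].
      * left. intros x [h1 h2]. apply (d x); split; [apply e1|apply e2]; auto.
      * right; right. intros x hx. apply e1, s, e2, hx.
    + destruct (gen f2 a2 f1 a1 (or_introl l)) as [d|s].
      * left. intros x [h1 h2]. apply (d x); split; [apply e2|apply e1]; auto.
      * right; left. intros x hx. apply e2, s, e1, hx.
Qed.

Lemma disle {K L Lp} (RK : K -> K -> Prop) (RL : L -> L -> Prop) (RLp : Lp -> Lp -> Prop) :
  infinite_cardinal RK -> infinite_cardinal RL -> successor_cardinal_of L RLp ->
  dis_le (ord_open (lex_lt RK RLp)) Lp.
Proof.
  intros hK hL hLp. pose proof (proj1 hK) as woK; pose proof (proj1 hLp) as woL.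
  pose proof woL as [ir [tr [tot wf]]].
  exists (fun g (f : Xspace RK RLp) => forall b, ~ RLp b g -> exists z, vX f b = Some z /\ is_zero RK z).
  split.
  - intros g f hf. exists (Cb RK RLp f g). split; [eapply C_open; eauto|split; [apply C_refl|]].
    intros y hy dy. apply X_eq. intros b. destruct (classic (RLp g b)) as [l|l].
    + assert (n : ~ RLp b g) by (intro c; apply (ir b); eauto).
      destruct (hf b n) as [z1 [e1 z1z]]. destruct (dy b n) as [z2 [e2 z2z]].
      rewrite e1, e2. f_equal. eapply zero_unique; eauto.
    + apply hy. apply nlt_le; auto.
  - intros f. exact (proj2_sig f).
Qed.

Lemma delta {K L Lp} (RK : K -> K -> Prop) (RL : L -> L -> Prop) (RLp : Lp -> Lp -> Prop) :
  infinite_cardinal RK -> infinite_cardinal RL -> successor_cardinal_of L RLp -> cof_le RK L ->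
  card_lt_Delta (ord_open (lex_lt RK RLp)) K.
Proof.
  intros hK hL hLp hcf U hU [x hx]. pose proof (proj1 hK) as woK; pose proof (proj1 hLp) as woL.
  pose proof woL as [ir [tr [tot wf]]].
  destruct (proj2_sig x) as [gx hgx].
  destruct (basis RK RLp woK woL U x gx hU hx) as [al [hal hs]].
  split.
  - destruct (Lp_nomax RL RLp hL hLp al) as [d hd].
    destruct (Lp_nomax RL RLp hL hLp d) as [e he].
    assert (supp : forall k, bounded_support RK RLp (updf (vX x) d (Some k))).
    { intros k. exists e. intros b hb. unfold updf. destruct excluded_middle_informative as [->|n]; [contradiction|].
      apply hgx. intro c. apply hb. apply (tr _ d); auto. apply (lt_le RLp woL b gx d c). left.
      apply (le_lt RLp woL gx al d hal hd). }
    assert (inC : forall k, Cb RK RLp x al (exist _ _ (supp k))).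
    { intros k b hb. simpl. unfold updf. destruct excluded_middle_informative as [->|n]; auto.
      exfalso. apply (lt_nle RLp woL _ _ hd hb). }
    exists (fun k => exist _ (exist _ _ (supp k)) (hs _ (inC k))).
    intros k k' ee. apply (f_equal (fun y => vX (vX y) d)) in ee. simpl in ee. unfold updf in ee.
    destruct excluded_middle_informative as [_|n]; [|congruence]. congruence.
  - intros Hle.
    destruct (positions RL RLp hL hLp al) as [p [pinj [pgt [bd pbd]]]].
    destruct (proj1 (proj2 hL)) as [iota _].
    assert (albd : RLp al bd) by (apply (tr _ (p (iota 0))); auto).
    pose (yf := fun (phi : L -> K) (c : Lp) => match excluded_middle_informative (exists i, p i = c) with
            | left H => Some (phi (proj1_sig (constructive_indefinite_description _ H)))
            | right _ => vX x c end).
    assert (supp : forall phi, bounded_support RK RLp (yf phi)).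
    { intros phi. exists bd. intros c hc. unfold yf. destruct excluded_middle_informative as [[i hi]|n].
      - exfalso. apply hc. rewrite <- hi; auto.
      - apply hgx. intro c'. apply hc. apply (lt_le RLp woL c gx bd c'). left.
        apply (le_lt RLp woL gx al bd hal albd). }
    assert (inC : forall phi, Cb RK RLp x al (exist _ _ (supp phi))).
    { intros phi b hb. simpl. unfold yf. destruct excluded_middle_informative as [[i hi]|n]; auto.
      exfalso. apply (lt_nle RLp woL _ _ (pgt i)). rewrite hi; auto. }
    apply (konig RK hK hcf). eapply cle_trans; [|exact Hle].
    exists (fun phi => exist _ (exist _ _ (supp phi)) (hs _ (inC phi))).
    intros phi psi ee. apply functional_extensionality. intros i.
    apply (f_equal (fun y => vX (vX y) (p i))) in ee. simpl in ee. unfold yf in ee.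
    destruct excluded_middle_informative as [H|n]; [|exfalso; eauto].
    destruct (constructive_indefinite_description _ H) as [j hj]; simpl in ee.
    apply pinj in hj. subst. congruence.
Qed.

Lemma rev_hist {T} (b : nat -> (T -> Prop) * T) n : exists r, rev (history b n) = b n :: r.
Proof. unfold history. rewrite seq_S, map_app, rev_app_distr. simpl. eauto. Qed.

Lemma choquet {K L Lp} (RK : K -> K -> Prop) (RL : L -> L -> Prop) (RLp : Lp -> Lp -> Prop) :
  infinite_cardinal RK -> infinite_cardinal RL -> successor_cardinal_of L RLp ->
  strong_choquet (ord_open (lex_lt RK RLp)).
Proof.
  intros hK hL hLp. pose proof (proj1 hK) as woK; pose proof (proj1 hLp) as woL.
  set (op := ord_open (lex_lt RK RLp)).
  assert (Ha : forall q : (Xspace RK RLp -> Prop) * Xspace RK RLp, exists al,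
             op (fst q) -> fst q (snd q) -> subset (Cb RK RLp (snd q) al) (fst q)).
  { intros [B f]; simpl. destruct (proj2_sig f) as [g _].
    destruct (classic (op B /\ B f)) as [[h1 h2]|N].
    - destruct (basis RK RLp woK woL B f g h1 h2) as [al [_ hs]]. eauto.
    - exists g. intros h1 h2; exfalso; auto. }
  destruct (choice_fun _ Ha) as [alpha halpha].
  exists (fun hist => match rev hist with nil => fun _ => True | q :: _ => Cb RK RLp (snd q) (alpha q) end).
  assert (ans : forall b n, answer (fun hist => match rev hist with nil => fun _ => True | q :: _ => Cb RK RLp (snd q) (alpha q) end) b n = Cb RK RLp (snd (b n)) (alpha (b n))).
  { intros b n. unfold answer. destruct (rev_hist b n) as [r e]. rewrite e. reflexivity. }
  split.
  - intros b n hl. rewrite ans. destruct (hl n (le_n n)) as [h1 [h2 _]]. split; [|split].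
    + eapply C_open; eauto.
    + apply C_refl.
    + apply halpha; auto.
  - intros b hl.
    assert (nest : forall n m, n <= m -> subset (Cb RK RLp (snd (b m)) (alpha (b m))) (Cb RK RLp (snd (b n)) (alpha (b n)))).
    { intros n m l. induction l; [intros x hx; auto|].
      intros x hx. apply IHl. destruct (hl (S m)) as [h1 [h2 h3]].
      pose proof (h3 m eq_refl) as h4. rewrite ans in h4. apply h4. apply halpha; auto. }
    destruct (limit RK RL RLp hK hL hLp (fun n => snd (b n)) (fun n => alpha (b n))) as [x hx].
    + intros n m l. apply (nest n m l). apply C_refl.
    + exists x. intros n. rewrite ans. apply hx.
Qed.

Lemma baire_X {K L Lp} (RK : K -> K -> Prop) (RL : L -> L -> Prop) (RLp : Lp -> Lp -> Prop) :
  infinite_cardinal RK -> infinite_cardinal RL -> successor_cardinal_of L RLp ->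
  baire (ord_open (lex_lt RK RLp)).
Proof.
  intros hK hL hLp D hD U hU [u hu]. pose proof (proj1 hK) as woK; pose proof (proj1 hLp) as woL.
  assert (st : forall n (q : Xspace RK RLp * Lp), exists q' : Xspace RK RLp * Lp,
     Cb RK RLp (fst q) (snd q) (fst q') /\ leR RLp (snd q) (snd q') /\ subset (Cb RK RLp (fst q') (snd q')) (D (S n))).
  { intros n [f a]; simpl. destruct (hD (S n)) as [o d].
    destruct (d (Cb RK RLp f a)) as [y [hy1 hy2]]; [eapply C_open; eauto|exists f; apply C_refl|].
    destruct (basis RK RLp woK woL (D (S n)) y a o hy2) as [al [hal hs]].
    exists (y, al); simpl; auto. }
  destruct (dchoice (fun n (s : Xspace RK RLp * Lp -> Xspace RK RLp * Lp) => forall q, let q' := s q in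
     Cb RK RLp (fst q) (snd q) (fst q') /\ leR RLp (snd q) (snd q') /\ subset (Cb RK RLp (fst q') (snd q')) (D (S n)))) as [stf hst].
  { intros n. apply (choice_fun _ (st n)). }
  destruct (hD 0) as [o0 d0]. destruct (d0 U hU (ex_intro _ u hu)) as [x0 [hx0 hx0']].
  destruct (proj2_sig x0) as [g _].
  destruct (basis RK RLp woK woL U x0 g hU hx0) as [a1 [_ hs1]].
  destruct (basis RK RLp woK woL (D 0) x0 a1 o0 hx0') as [a0 [ha0 hs0]].
  pose (sq := fix sq n := match n with 0 => (x0, a0) | S k => stf k (sq k) end).
  assert (step : forall n, subset (Cb RK RLp (fst (sq (S n))) (snd (sq (S n)))) (Cb RK RLp (fst (sq n)) (snd (sq n)))).
  { intros n. simpl. destruct (hst n (sq n)) as [h1 [h2 _]]. eapply C_nest; eauto. }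
  assert (nest : forall n m, n <= m -> subset (Cb RK RLp (fst (sq m)) (snd (sq m))) (Cb RK RLp (fst (sq n)) (snd (sq n)))).
  { intros n m l. induction l; [intros x hx; auto|]. intros x hx. apply IHl, step, hx. }
  destruct (limit RK RL RLp hK hL hLp (fun n => fst (sq n)) (fun n => snd (sq n))) as [x hx].
  { intros n m l. apply (nest n m l). apply C_refl. }
  exists x. split.
  - apply hs1. apply (C_nest RK RLp woL x0 x0 a1 a0); auto. apply C_refl. exact (hx 0).
  - intros [|n].
    + apply hs0. exact (hx 0).
    + destruct (hst n (sq n)) as [_ [_ h3]]. apply h3. exact (hx (S n)).
Qed.

Theorem mainTheorem14
  (K : Type) (RK : K -> K -> Prop)       (* kappa *)
  (L : Type) (RL : L -> L -> Prop)       (* lambda *)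
  (Lp : Type) (RLp : Lp -> Lp -> Prop)   (* lambda^+ *)
  (hK : infinite_cardinal RK)
  (hL : infinite_cardinal RL)
  (hLp : successor_cardinal_of L RLp)
  (hcf : cof_le RK L)
  (hLK : card_lt L K) :
  let op := ord_open (lex_lt RK RLp) in
  strict_linear_order (lex_lt RK RLp) /\
  strong_choquet op /\
  baire op /\
  non_archimedean op /\
  dis_le op Lp /\
  card_lt Lp K /\
  card_lt_Delta op K.
Proof.
  intros op. split; [apply lex_slo; [apply hK|apply hLp]|].
  split; [apply (choquet RK RL RLp); auto|].
  split; [apply (baire_X RK RL RLp); auto|].
  split; [apply (nonarch RK RL RLp); auto|].
  split; [apply (disle RK RL RLp); auto|].
  split; [split; [apply (@Lp_le_K K L Lp RK RLp); auto|apply (K_not_le_Lp RK RL RLp); auto]|].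
  apply (delta RK RL RLp); auto.
Qed.
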